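(* In a combinatorial auction where all bidders play piecewise constant strategies, suppose there is a constant $c\in\mathbb{R}_{\ge0}$ such that every bid $b_j(K)$ of every bidder $j$ on every bundle $K$ (that occurs with positive probability) is an integer multiple of $c$. Then for every bidder $i$, all coordinates of all cell vertices of bidder $i$'s action space are integer multiples of $c$.
   Context: A combinatorial auction sells goods $M$ to bidders $N$; each bidder $i$ bids a vector $b_i\in\mathbb{R}_{\ge0}^r$ on his $r$ bundles of interest (other bundles bid $0$). An allocation gives each bidder one bundle of interest or $\emptyset$, pairwise disjoint; $X(b)$ is the set of allocations maximizing $\sum_i b_i(x_i)$. Bidders' valuations are independent random variables $V_j$ and a strategy $s_j$ maps valuations to bids; it is piecewise constant if it takes finitely many values, so the distribution of $b_{-i}=s_{-i}(V_{-i})$ has finite support. A cell of bidder $i$'s action space $\mathbb{R}_{\ge0}^r$ is a connected region $S$ such that for every $b_{-i}$ with positive probability there exists an allocation $x$ with $x\in X(b_i,b_{-i})$ for all $b_i\in S$; cells are convex polytopes and cell vertices are their vertices. *)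

(* Defs.v *)
From HB Require Import structures.
From mathcomp Require Import all_boot all_order all_algebra.
From mathcomp Require Import all_classical all_reals topology normedtype matrix_topology matrix_normedtype.
Set Implicit Arguments. Unset Strict Implicit. Unset Printing Implicit Defensive.
Import Order.TTheory GRing.Theory Num.Theory.
Import numFieldNormedType.Exports.
Local Open Scope classical_set_scope.
Local Open Scope ring_scope.

Section Auction.
Variables (R : realType) (G I : finType) (r : I -> nat).
(* bundle j k : the k-th bundle of interest of bidder j (a set of goods) *)
Variable bundle : forall j : I, 'I_(r j) -> {set G}.

(* An allocation assigns to each bidder one bundle of interest (Some k) or the
   empty bundle (None). *)
Definition allocation := forall j : I, option 'I_(r j).

Definition alloc_set (j : I) (o : option 'I_(r j)) : {set G} :=
  if o is Some k then bundle k else finset.set0.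

Definition feasible (x : allocation) : Prop :=
  forall j k : I, j != k -> (alloc_set (x j) :&: alloc_set (x k) = finset.set0).

(* a bid vector of bidder j : one bid per bundle of interest, empty bundle = 0 *)
Definition bidval (n : nat) (b : 'rV[R]_n) (o : option 'I_n) : R :=
  if o is Some k then b ord0 k else 0.

(* welfare of allocation x for the profile (b_i, b_{-i}); the i-th component of
   the profile bo is ignored, it is replaced by b_i. *)
Definition welfare (i : I) (bi : 'rV[R]_(r i)) (bo : forall j, 'rV[R]_(r j))
    (x : allocation) : R :=
  bidval bi (x i) + \sum_(j | j != i) bidval (bo j) (x j).

Definition optimal (i : I) (bi : 'rV[R]_(r i)) (bo : forall j, 'rV[R]_(r j))
    (x : allocation) : Prop :=
  feasible x /\ forall y, feasible y -> welfare bi bo y <= welfare bi bo x.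

Definition nonneg_bid (n : nat) (b : 'rV[R]_n) : Prop := forall k, 0 <= b ord0 k.

(* Bsupp j : the (finite) set of bids of bidder j occurring with positive
   probability, i.e. the support of s_j(V_j). *)
Variable Bsupp : forall j : I, seq 'rV[R]_(r j).

Definition pos_prob_others (i : I) (bo : forall j, 'rV[R]_(r j)) : Prop :=
  forall j, j != i -> bo j \in Bsupp j.

Definition cell_property (i : I) (S : set 'rV[R]_(r i)) : Prop :=
  S `<=` [set b | nonneg_bid b] /\
  forall bo, pos_prob_others i bo ->
    exists x : allocation, forall bi, S bi -> optimal bi bo x.

Definition is_cell (i : I) (S : set 'rV[R]_(r i)) : Prop :=
  S !=set0 /\ connected S /\ cell_property S /\
  forall T, S `<=` T -> connected T -> cell_property T -> T = S.

End Auction.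

Definition is_vertex (R : realType) (n : nat) (S : set 'rV[R]_n) (v : 'rV[R]_n) : Prop :=
  S v /\ forall a b t, S a -> S b -> 0 < t -> t < 1 ->
    v = (1 - t) *: a + t *: b -> a = b.

Definition int_multiple (R : realType) (c x : R) : Prop :=
  exists z : int, x = z%:~R * c.

(* Main.v *)
Require Import Defs.
From HB Require Import structures.
From mathcomp Require Import all_boot all_order all_algebra.
From mathcomp Require Import all_classical all_reals topology normedtype matrix_topology matrix_normedtype.
From mathcomp Require Import ring lra.
Import Order.TTheory GRing.Theory Num.Theory.
Import numFieldNormedType.Exports.
Local Open Scope classical_set_scope.
Local Open Scope ring_scope.

Lemma seg_connected (R : realType) n (v d : 'rV[R]_n) (e : R) :
  connected ((fun t : R => v + t *: d) @` [set` `[-e, e]%R]).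
Proof.
apply: connected_continuous_connected.
  by apply/connected_intervalP; exact: interval_is_interval.
apply: continuous_subspaceT => t.
apply: cvgD; first exact: cvg_cst.
exact: cvgZr_tmp.
Qed.

Lemma im0 (R : realType) (c : R) : int_multiple c 0.
Proof. by exists 0; rewrite mul0r. Qed.

Lemma imD (R : realType) (c x y : R) :
  int_multiple c x -> int_multiple c y -> int_multiple c (x + y).
Proof. by move=> [a ->] [b ->]; exists (a + b); rewrite intrD mulrDl. Qed.

Lemma imN (R : realType) (c x : R) :
  int_multiple c x -> int_multiple c (- x).
Proof. by move=> [a ->]; exists (- a); rewrite intrN mulNr. Qed.

Lemma imB (R : realType) (c x y : R) :
  int_multiple c x -> int_multiple c y -> int_multiple c (x - y).
Proof. by move=> hx hy; apply: imD => //; apply: imN. Qed.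

Arguments im0 {R}.
Arguments imD {R c x y}.
Arguments imN {R c x}.
Arguments imB {R c x y}.

Definition gfun (R : realType) (c u : R) := u - (Num.floor (u / c))%:~R * c.

Arguments gfun {R}.

Lemma key (R : realType) (c u A : R) : 0 <= c -> int_multiple c A -> A <= u ->
  ~ int_multiple c u -> 0 < gfun c u /\ gfun c u <= u - A.
Proof.
move=> c0 [K ->]; have [->|cpos] := eqVneq c 0.
  rewrite /gfun invr0 !mulr0 !subr0 => hu nu; split => //.
  rewrite lt_neqAle hu andbT; apply/eqP => u0; apply: nu; exists 0.
  by rewrite -u0 mulr0.
move=> hA nu.
have cp : 0 < c by rewrite lt_neqAle eq_sym cpos c0.
have hF := floor_le (u / c).
have hF' : (Num.floor (u / c))%:~R * c <= u by rewrite -ler_pdivlMr.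
split.
  rewrite /gfun lt_neqAle subr_ge0 hF' andbT; apply/eqP => e.
  apply: nu; exists (Num.floor (u / c)); apply/eqP; rewrite -subr_eq0 -e.
  by [].
have hK : K%:~R <= u / c by rewrite ler_pdivlMr.
have : K <= Num.floor (u / c) by rewrite floor_ge_int.
rewrite -(ler_int R) => hK2.
have : K%:~R * c <= (Num.floor (u / c))%:~R * c by rewrite ler_pM2r.
rewrite /gfun; lra.
Qed.

Arguments key {R c u A}.

Lemma bidval_w (R : realType) n (v d : 'rV[R]_n) (t : R) o :
  bidval (v + t *: d) o = bidval v o + t * bidval d o.
Proof. by case: o => [q|] /=; rewrite ?mxE ?mulr0 ?addr0. Qed.

Theorem lemma1 (R : realType) (G I : finType) (r : I -> nat)
  (bundle : forall j : I, 'I_(r j) -> {set G})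
  (Bsupp : forall j : I, seq 'rV[R]_(r j)) (c : R) :
  0 <= c ->
  (forall j, Bsupp j != [::]) ->
  (forall j b, b \in Bsupp j -> nonneg_bid b) ->
  (forall j b k, b \in Bsupp j -> int_multiple c (b ord0 k)) ->
  forall (i : I) (S : set 'rV[R]_(r i)),
    is_cell bundle Bsupp S ->
    forall v, is_vertex S v -> forall k, int_multiple c (v ord0 k).
Proof.
move=> c0 _ Bnn Bint i S [_ [Scon [[Snn Sopt] Smax]]] v [Sv vext] k.
have [//|nm] := pselect (int_multiple c (v ord0 k)).
exfalso.
pose d : 'rV[R]_(r i) :=
  \row_q (if `[< int_multiple c (v ord0 q - v ord0 k) >] then 1 else 0).
have dv01 : forall o, bidval d o = 0 \/ bidval d o = 1.
  by case=> [q|] /=; [rewrite mxE; case: ifP => _; [right|left] | left].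
have dv_eq : forall a b, int_multiple c (bidval v a - bidval v b) ->
    bidval d a = bidval d b.
  case=> [p|] [q|] /= h //.
  - rewrite !mxE; case: (asboolP (int_multiple c (v ord0 p - v ord0 k)));
    case: (asboolP (int_multiple c (v ord0 q - v ord0 k))) => // h1 h2.
    + exfalso; apply: h1.
      have -> : v ord0 q - v ord0 k = (v ord0 p - v ord0 k) - (v ord0 p - v ord0 q)
        by ring.
      exact: imB.
    + exfalso; apply: h2.
      have -> : v ord0 p - v ord0 k = (v ord0 p - v ord0 q) + (v ord0 q - v ord0 k)
        by ring.
      exact: imD.
  - rewrite !mxE; case: asboolP => // h1; exfalso; apply: nm.
    have -> : v ord0 k = (v ord0 p - 0) - (v ord0 p - v ord0 k) by ring.
    exact: imB.
  - rewrite !mxE; case: asboolP => // h1; exfalso; apply: nm.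
    have -> : v ord0 k = - (0 - v ord0 q) - (v ord0 q - v ord0 k) by ring.
    exact/imB/h1/imN.
pose h (p : option 'I_(r i) * option 'I_(r i)) :=
  let u := bidval v p.1 - bidval v p.2 in if 0 < gfun c u then gfun c u else 1.
pose eps := \big[Order.min/1]_p h p.
have eps_gt0 : 0 < eps.
  apply: (big_ind (fun x => 0 < x)) => // [x y hx hy|p _].
    by rewrite lt_min hx hy.
  by rewrite /h; case: ifP.
have eps_le : forall p, eps <= h p by move=> p; exact: bigmin_le.
have step : forall a b A, int_multiple c A -> A <= bidval v a - bidval v b ->
    forall t, `|t| <= eps ->
    A <= bidval (v + t *: d) a - bidval (v + t *: d) b.
  move=> a b A hA hAu t ht; rewrite !bidval_w.
  have /andP[t1 t2] : - `|t| <= t <= `|t| by rewrite -ler_norml.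
  have [e|ne] := pselect (int_multiple c (bidval v a - bidval v b)).
    rewrite (dv_eq _ _ e); lra.
  have [gp gl] := key c0 hA hAu ne.
  have := eps_le (a, b); rewrite /h /= gp => he.
  by case: (dv01 a) => ->; case: (dv01 b) => ->; lra.
pose f := fun t : R => v + t *: d.
pose seg := f @` [set` `[-eps, eps]%R].
have inseg : forall t, t \in `[-eps, eps]%R -> `|t| <= eps.
  by move=> t; rewrite in_itv /= ler_norml.
have seg0 : seg v.
  exists 0; last by rewrite /f scale0r addr0.
  by rewrite /= in_itv /= oppr_le0 ltW.
have T_cell : cell_property bundle Bsupp (S `|` seg).
  split.
    move=> b [Sb|[t ht <-]]; first exact: Snn.
    move=> q; have := step (Some q) None 0 (im0 c).
    rewrite /= subr0 => /(_ (Snn _ Sv q) t (inseg _ ht)).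
    by rewrite subr0 mxE.
  move=> bo hbo; have [x hx] := Sopt bo hbo.
  exists x => bi [Sbi|[t ht <-]]; first exact: hx.
  have [fx wx] := hx v Sv; split => // y fy.
  have := wx y fy; rewrite /welfare => hw.
  have rest_im : forall z : allocation r,
      int_multiple c (\sum_(j | j != i) bidval (bo j) (z j)).
    move=> z; apply: (big_ind (int_multiple c)) => //; first exact: im0.
      by move=> ? ?; exact: imD.
    move=> j hj; case: (z j) => [q|] /=; last exact: im0.
    exact: Bint (hbo j hj).
  have := step (x i) (y i) _ (imB (rest_im y) (rest_im x)) ltac:(lra) t (inseg _ ht).
  rewrite /f; lra.
have T_con : connected (S `|` seg).
  apply: connectedU => //; first by exists v.
  exact: seg_connected.
have TS := Smax _ (fun b Sb => or_introl Sb) T_con T_cell.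
have Sp : S (f eps).
  rewrite -TS; right; exists eps => //.
  by rewrite /= in_itv /=; apply/andP; split; lra.
have Sm : S (f (- eps)).
  rewrite -TS; right; exists (- eps) => //.
  by rewrite /= in_itv /=; apply/andP; split; lra.
have := vext _ _ (1/2) Sm Sp ltac:(lra) ltac:(lra).
have hv : v = (1 - 1/2) *: f (- eps) + 1/2 *: f eps.
  by apply/matrixP => p q; rewrite /f !mxE; field.
move=> /(_ hv) /matrixP /(_ ord0 k); rewrite /f !mxE.
have -> : `[< int_multiple c (v ord0 k - v ord0 k) >] = true.
  by apply/asboolP; rewrite subrr; exact: im0.
lra.
Qed.
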